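(* For every positive integer $n$, $$\sum_{k=0}^{n-1}k(k+1)(8k+9)T_kT_{k+1}=\frac{(-1)^nn}{6}\sum_{k=0}^{n-1}\binom{n-1}{k}\binom{-n-1}{k}C_k3^{n-1-k}a(n,k),$$ where $$a(n,k)=4k^2n^2-8kn^3-14k^2n-14kn^2-4n^3+13k^2-11kn-26n^2+39k+4n+26.$$
   Context: $T_n=\sum_{k=0}^{\lfloor n/2\rfloor}\binom{n}{2k}\binom{2k}{k}$ is the central trinomial coefficient (constant term of $(1+x+x^{-1})^n$); $C_k=\binom{2k}{k}/(k+1)$; $\binom{x}{k}=x(x-1)\cdots(x-k+1)/k!$ for any integer $x$. *)

(* Defs.v *)
From mathcomp Require Import all_boot all_order all_algebra.
Set Implicit Arguments. Unset Strict Implicit. Unset Printing Implicit Defensive.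
Import Order.TTheory GRing.Theory Num.Theory.
Local Open Scope ring_scope.

(* Central trinomial coefficient T_n = sum_{k<=n/2} C(n,2k) C(2k,k). *)
Definition T (n : nat) : nat :=
  (\sum_(0 <= k < (n./2).+1) 'C(n, 2 * k) * 'C(2 * k, k))%N.

Definition catalan (k : nat) : rat := ('C(2 * k, k))%:R / (k.+1)%:R.

Definition binz (x : int) (k : nat) : rat :=
  (\prod_(i < k) (x - i%:Z)%:~R) / (k`!)%:R.

Definition a_coef (n k : nat) : rat :=
  let n := n%:R : rat in let k := k%:R : rat in
  4 * k ^+ 2 * n ^+ 2 - 8 * k * n ^+ 3 - 14 * k ^+ 2 * n - 14 * k * n ^+ 2
  - 4 * n ^+ 3 + 13 * k ^+ 2 - 11 * k * n - 26 * n ^+ 2 + 39 * k + 4 * n + 26.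

(* Main.v *)
Require Import Defs.
From mathcomp Require Import all_boot all_order all_algebra.
From mathcomp Require Import ring lra zify.
Import Order.TTheory GRing.Theory Num.Theory.
Local Open Scope ring_scope.

Lemma binD (m j : nat) :
  (m.+1%:R - j%:R) * ('C(m.+1, j))%:R = m.+1%:R * ('C(m, j))%:R :> rat.
Proof.
case: (leqP j m.+1) => hj.
  by rewrite -natrB // -!natrM mul_bin_down.
rewrite !bin_small ?mulr0 //; exact: ltnW.
Qed.

Lemma binS2 (n j : nat) :
  j.+1%:R * ('C(n, j.+1))%:R = (n%:R - j%:R) * ('C(n, j))%:R :> rat.
Proof.
case: (leqP j n) => hj.
  by rewrite -natrB // -!natrM mul_bin_left.
rewrite !bin_small ?mulr0 //; exact: ltnW.
Qed.

Lemma lc1 (x : rat) {a b L R : rat} : a = b -> L = R + x * (a - b) -> L = R.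
Proof. by move=> -> ->; rewrite subrr mulr0 addr0. Qed.

Lemma natr_neq0 (n : nat) : (n.+1%:R : rat) != 0.
Proof. by rewrite pnatr_eq0. Qed.

Lemma central (k : nat) :
  (k.+1%:R)^+2 * ('C((k.*2).+2, k.+1))%:R
  = (k.*2).+2%:R * (k.*2).+1%:R * ('C(k.*2, k))%:R :> rat.
Proof.
apply: (lc1 k.+1%:R (binS2 (k.*2).+2 k)).
apply: (lc1 k.+1%:R (binD (k.*2).+1 k)).
apply: (lc1 (k.*2).+2%:R (binD (k.*2) k)).
rewrite -!muln2; ring.
Qed.

Ltac addnn := repeat match goal with
  | n : nat |- _ => lazymatch goal with
     | _ : is_true (@Order.le _ _ 0 (n%:R : rat)) |- _ => fail
     | _ => have := ler0n rat n; move=> ? end end.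
Ltac nz1 := lazymatch goal with
  | |- is_true (?a * ?b != 0) => apply: mulf_neq0; nz1
  | |- is_true (?a ^-1 != 0) => apply: invr_neq0; nz1
  | |- is_true (?a ^+ ?n != 0) => apply: expf_neq0; nz1
  | |- _ => first [ done | apply: lt0r_neq0; addnn; lra ] end.
Ltac nz := repeat (apply/andP; split); nz1.

Definition t (n k : nat) : rat := ('C(n, 2 * k) * 'C(2 * k, k))%:R.

Lemma tdown (m k : nat) : t m k = (m.+1%:R - (2*k)%:R) / m.+1%:R * t m.+1 k.
Proof.
rewrite /t !natrM.
apply: (lc1 (- ('C(2*k,k))%:R / m.+1%:R) (binD m (2*k))).
by field; nz.
Qed.

Lemma tup (n k : nat) : t n k.+1 =
  (n%:R - (2*k)%:R) * (n%:R - (2*k)%:R - 1) / (k.+1%:R)^+2 * t n k.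
Proof.
rewrite /t !natrM.
have -> : (2 * k.+1 = (k.*2).+2)%N by rewrite -muln2; lia.
have -> : (2 * k = k.*2)%N by rewrite -muln2 mulnC.
have e1 := binS2 n (k.*2).
have e2 := binS2 n (k.*2).+1.
have e3 := central k.
apply: (lc1 (('C(n, (k.*2).+2))%:R / (k.+1%:R)^+2) e3).
apply: (lc1 ((k.*2).+1%:R * ('C(k.*2, k))%:R / (k.+1%:R)^+2) e2).
apply: (lc1 ((n%:R - (k.*2)%:R - 1) * ('C(k.*2, k))%:R / (k.+1%:R)^+2) e1).
rewrite -!muln2; field; nz.
Qed.

Definition h (n k : nat) : rat :=
  (-3)^+n / (-3)^+k * ('C(n,k))%:R * ('C(n+k,k))%:R * ('C(2*k,k))%:R.

Lemma hbin (n k : nat) : (n+k).+1%:R * ('C(n,k))%:R * ('C(n+k,k))%:R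
   = (n.+1%:R - k%:R) * ('C(n.+1,k))%:R * ('C((n+k).+1,k))%:R :> rat.
Proof.
apply: (lc1 (- ('C((n+k).+1,k))%:R) (binD n k)).
apply: (lc1 (- ('C(n,k))%:R) (binD (n+k) k)).
ring.
Qed.

Lemma m3_neq0 : (-3 : rat) != 0. Proof. by []. Qed.

Lemma hdown (n k : nat) : h n k = (k%:R - n.+1%:R) / (3 * (n+k).+1%:R) * h n.+1 k.
Proof.
rewrite /h addSn exprS.
apply: (lc1 ((-3)^+n / (-3)^+k * ('C(2*k,k))%:R / (n+k).+1%:R) (hbin n k)).
by field; nz.
Qed.

Lemma hup (n k : nat) : h n k.+1 =
  - 2%:R * (n%:R - k%:R) * (n+k).+1%:R * (2*k).+1%:R / (3 * (k.+1%:R)^+3) * h n k.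
Proof.
rewrite /h addnS exprS.
have -> : (2 * k.+1 = (k.*2).+2)%N by rewrite -muln2; lia.
have -> : (2 * k = k.*2)%N by rewrite -muln2 mulnC.
set s := (-3 : rat)^+n / (-3)^+k.
have e3 := central k.
have f1 := binS2 n k.
have f2 := binS2 (n+k).+1 k.
have f3 := binD (n+k) k.
apply: (lc1 (-(s/3) * ('C(n, k.+1))%:R * ('C((n+k).+1, k.+1))%:R / (k.+1%:R)^+2) e3).
apply: (lc1 (-(s/3) * ('C((n+k).+1, k.+1))%:R * (k.*2).+2%:R * (k.*2).+1%:R * ('C(k.*2, k))%:R / (k.+1%:R)^+3) f1).
apply: (lc1 (-(s/3) * (n%:R - k%:R) * ('C(n,k))%:R * (k.*2).+2%:R * (k.*2).+1%:R * ('C(k.*2, k))%:R / (k.+1%:R)^+4) f2).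
apply: (lc1 (-(s/3) * (n%:R - k%:R) * ('C(n,k))%:R * (k.*2).+2%:R * (k.*2).+1%:R * ('C(k.*2, k))%:R / (k.+1%:R)^+4) f3).
rewrite /s -!muln2; field; nz.
Qed.

Lemma tele (F G : nat -> rat) (N : nat) : (forall k, F k = G k.+1 - G k) ->
  G 0%N = 0 -> G N = 0 -> \sum_(0 <= k < N) F k = 0.
Proof.
move=> e g0 gN; rewrite (@telescope_sumr_eq _ 0 N G F) ?g0 ?gN ?subrr // => k _.
Qed.

Lemma sum_ext (F : nat -> rat) (M N : nat) : (M <= N)%N ->
  (forall k, (M <= k)%N -> F k = 0) ->
  \sum_(0 <= k < N) F k = \sum_(0 <= k < M) F k.
Proof.
move=> hMN hF; rewrite (@big_cat_nat _ _ _ M 0 N) //=.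
rewrite [X in _ + X]big1_seq ?addr0 // => k /=.
by rewrite mem_index_iota => /andP[hk _]; apply: hF.
Qed.

Lemma t_big (n k : nat) : (n < 2 * k)%N -> t n k = 0.
Proof. by move=> hk; rewrite /t bin_small. Qed.

Lemma Tsum (n N : nat) : (n < N)%N -> (T n)%:R = \sum_(0 <= k < N) t n k.
Proof.
move=> hN; rewrite /T natr_sum.
rewrite (@sum_ext _ n./2.+1 N).
- by apply: eq_bigr.
- apply: leq_ltn_trans hN; rewrite leq_half_double -muln2; lia.
- move=> k hk; apply: t_big. rewrite mul2n -ltn_half_double. exact: hk.
Qed.

Lemma Trec (n : nat) : n.+2%:R * (T n.+2)%:R
  = (2 * n + 3)%:R * (T n.+1)%:R + 3 * n.+1%:R * (T n)%:R :> rat.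
Proof.
rewrite !(@Tsum _ n.+3); try lia.
have key : \sum_(0 <= k < n.+3) (n.+2%:R * t n.+2 k - (2 * n + 3)%:R * t n.+1 k
      - 3 * n.+1%:R * t n k) = 0.
  apply: (@tele _ (fun k => - 4 * k%:R ^+ 2 / n.+2%:R * t n.+2 k)).
  - move=> k. rewrite (tdown n k) (tdown n.+1 k) tup. by field; nz.
  - by rewrite /= expr0n !(mulr0, mul0r).
  - by rewrite t_big ?mulr0 //; lia.
move: key; rewrite !sumrB -!mulr_sumr => key.
apply: (lc1 1 key); ring.
Qed.


Lemma hdownR (n k : nat) : h n k = (k%:R - n%:R - 1) / (3 * (n%:R + k%:R + 1)) * h n.+1 k.
Proof.
rewrite {1}hdown; congr (_ * _).
by rewrite -[(n+k).+1%:R]natr1 natrD -[n.+1%:R]natr1 opprD addrA.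
Qed.

Lemma hupR (n k : nat) : h n k.+1 =
  - 2 * (n%:R - k%:R) * (n%:R + k%:R + 1) * (2 * k%:R + 1) / (3 * (k%:R + 1)^+3) * h n k.
Proof.
rewrite {1}hup; congr (_ * _).
rewrite -[(n+k).+1%:R]natr1 natrD -[(2*k).+1%:R]natr1 natrM -[k.+1%:R]natr1.
by [].
Qed.
Definition X (m : nat) : rat := \sum_(0 <= k < m.+1) h m k.

Lemma h_big (n k : nat) : (n < k)%N -> h n k = 0.
Proof. by move=> hk; rewrite /h (bin_small hk) !(mulr0, mul0r). Qed.

Lemma Xsum (n N : nat) : (n < N)%N -> X n = \sum_(0 <= k < N) h n k.
Proof. move=> hN; rewrite /X (@sum_ext _ n.+1 N) // => k hk; exact: h_big. Qed.

Definition c0 (n : nat) : rat := 27 * (n%:R + 1)^+2 * (2 * n%:R + 5).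
Definition c1 (n : nat) : rat := - (243 + 414 * n%:R + 231 * n%:R^+2 + 42 * n%:R^+3).
Definition c2 (n : nat) : rat := - (135 + 194 * n%:R + 91 * n%:R^+2 + 14 * n%:R^+3).
Definition c3 (n : nat) : rat := (n%:R + 3)^+2 * (2 * n%:R + 3).

Lemma sum_lin4 (N : nat) (a b c d : rat) (F G H K : nat -> rat) :
  \sum_(0 <= k < N) (a * F k + b * G k + c * H k + d * K k)
  = a * \sum_(0 <= k < N) F k + b * \sum_(0 <= k < N) G k
    + c * \sum_(0 <= k < N) H k + d * \sum_(0 <= k < N) K k.
Proof. by rewrite !big_split !mulr_sumr. Qed.

Lemma Xrec (n : nat) : c0 n * X n + c1 n * X n.+1 + c2 n * X n.+2 + c3 n * X n.+3 = 0.
Proof.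
rewrite !(@Xsum _ n.+4); try lia.
have key : \sum_(0 <= k < n.+4) (c0 n * h n k + c1 n * h n.+1 k + c2 n * h n.+2 k
      + c3 n * h n.+3 k) = 0.
  apply: (@tele _ (fun k => - 4 * k%:R ^+ 3 * (n%:R + 2) * (2 * n%:R + 3) * (2 * n%:R + 5)
     / ((n%:R + k%:R + 1) * (n%:R + k%:R + 2) * (n%:R + k%:R + 3)) * h n.+3 k)).
  - move=> k. rewrite (hdownR n k) (hdownR n.+1 k) (hdownR n.+2 k) hupR /c0 /c1 /c2 /c3.
    rewrite -(@natr1 rat n.+2) -(@natr1 rat n.+1) -(@natr1 rat n) -(@natr1 rat k).
    have hx := ler0n rat n; have hy := ler0n rat k.
    move: (n%:R) (k%:R) hx hy (h n.+3 k) => x y hx hy H.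
    field. nz.
  - by rewrite /= expr0n !(mulr0, mul0r).
  - by rewrite h_big ?mulr0 //; lia.
move: key; rewrite sum_lin4 => key.
exact: key.
Qed.

Definition Af (x : rat) : rat := -3/8 + 3/4 * x + 9/8 * x^+2 - 3/2 * x^+3 - 3/2 * x^+4.
Definition Bf (x : rat) : rat := 3/4 - 1/2 * x - 5/4 * x^+2 + x^+3 + x^+4.
Definition Cf (x : rat) : rat := -3/8 - 1/4 * x + 11/24 * x^+2 + 1/6 * x^+3 - 1/6 * x^+4.
Definition alf (x : rat) : rat := Af x - 3 * (x + 1) / (2 * (2 * x + 3)) * Bf x.
Definition bef (x : rat) : rat := Cf x - (2 * x + 3) / (6 * (x + 1)) * Bf x.
Definition gaf (x : rat) : rat := Bf x * (x + 2)^+2 / (6 * (x + 1) * (2 * x + 3)).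
Definition P4 (x y : rat) : rat := y^+2 / 108 * (2 + 78 * y - 26 * y^+2 - 13 * x - 68 * x * y
  + 28 * x * y^+2 - 15 * x^+2 - 8 * x^+2 * y - 8 * x^+2 * y^+2 + 4 * x^+3 + 40 * x^+3 * y + 4 * x^+4).

Definition f (n k : nat) : rat := h n k * (n%:R - k%:R) * a_coef n k / (k%:R + 1).

Lemma Rstep (n : nat) : \sum_(0 <= k < n.+3) f n k / 18
  = alf n%:R * X n + bef n%:R * X n.+1 + gaf n%:R * X n.+2.
Proof.
have key : \sum_(0 <= k < n.+3) (1 / 18 * f n k + (- alf n%:R) * h n k
     + (- bef n%:R) * h n.+1 k + (- gaf n%:R) * h n.+2 k) = 0.
  apply: (@tele _ (fun k => P4 n%:R k%:R / ((n%:R + k%:R + 1) * (n%:R + k%:R + 2)) * h n.+2 k)).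
  - move=> k. rewrite /f (hdownR n k) (hdownR n.+1 k) hupR /alf /bef /gaf /Af /Bf /Cf /P4 /a_coef.
    rewrite -(@natr1 rat n.+1) -(@natr1 rat n) -(@natr1 rat k).
    have hx := ler0n rat n; have hy := ler0n rat k.
    move: (n%:R) (k%:R) hx hy (h n.+2 k) => x y hx hy H.
    field. nz.
  - by rewrite /P4 /= expr0n !(mulr0, mul0r).
  - by rewrite h_big ?mulr0 //; lia.
have l0 : (n < n.+3)%N by lia. have l1 : (n.+1 < n.+3)%N by lia. have l2 : (n.+2 < n.+3)%N by lia.
move: key; rewrite sum_lin4 -(@Xsum n n.+3 l0) -(@Xsum n.+1 n.+3 l1) -(@Xsum n.+2 n.+3 l2) => key.
have -> : \sum_(0 <= k < n.+3) f n k / 18 = 1 / 18 * \sum_(0 <= k < n.+3) f n k.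
  by rewrite mulr_sumr; apply: eq_bigr => k _; rewrite mul1r mulrC.
move: key. move: (\sum_(0 <= k < n.+3) f n k) (X n) (X n.+1) (X n.+2) (alf n%:R) (bef n%:R) (gaf n%:R)
  => SF x0 x1 x2 a b c key.
apply: (lc1 1 key); ring.
Qed.

Lemma prod_nat (m k : nat) :
  \prod_(i < k) ((m%:Z - i%:Z)%:~R : rat) = (m ^_ k)%:R.
Proof.
elim: k => [|k IH]; first by rewrite big_ord0 ffactn0.
rewrite big_ord_recr /= IH ffactnSr.
case: (leqP k m) => hk.
  by rewrite natrM natrB // intrB -!pmulrn.
by rewrite ffact_small // !mul0r.
Qed.

Lemma binz_nat (m k : nat) : binz m%:Z k = ('C(m, k))%:R.
Proof.
rewrite /binz prod_nat -bin_ffact natrM mulfK //.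
by rewrite pnatr_eq0 -lt0n fact_gt0.
Qed.

Lemma prod_neg (n k : nat) :
  \prod_(i < k) ((- n%:Z - 1 - i%:Z)%:~R : rat) = (-1)^+k * ((n + k) ^_ k)%:R.
Proof.
elim: k => [|k IH]; first by rewrite big_ord0 ffactn0 expr0 mulr1.
rewrite big_ord_recr /= IH addnS ffactSS natrM exprS.
rewrite !intrD !intrN.
have -> : ((n + k).+1%:R : rat) = n%:R + k%:R + 1 by rewrite -natr1 natrD.
rewrite -!pmulrn. ring.
Qed.

Lemma binz_neg (n k : nat) : binz (- n%:Z - 1) k = (-1)^+k * ('C(n + k, k))%:R.
Proof.
rewrite /binz prod_neg -bin_ffact natrM mulrA mulfK //.
by rewrite pnatr_eq0 -lt0n fact_gt0.
Qed.

Notation u m := ((T m)%:R : rat).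

Lemma TrecR (n : nat) : u n.+2 = ((2 * n%:R + 3) * u n.+1 + 3 * (n%:R + 1) * u n) / (n%:R + 2).
Proof.
have e := Trec n.
apply: (lc1 (1 / n.+2%:R) e).
by field; nz.
Qed.

Lemma T0 : u 0 = 1. Proof. by rewrite /T unlock. Qed.
Lemma T1 : u 1 = 1. Proof. by rewrite /T unlock. Qed.
Lemma T2 : u 2 = 3. Proof. by rewrite /T unlock. Qed.

Lemma X0 : X 0 = 1. Proof. by rewrite /X unlock /h. Qed.
Lemma X1 : X 1 = 1. Proof. by rewrite /X unlock /h. Qed.
Lemma X2 : X 2 = 9. Proof. by rewrite /X unlock /h. Qed.

Lemma LHS_Q (n : nat) :
  \sum_(0 <= k < n) ((k * k.+1 * (8 * k + 9) * T k * T k.+1)%N)%:R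
  = Af n%:R * u n ^+ 2 + Bf n%:R * u n * u n.+1 + Cf n%:R * u n.+1 ^+ 2.
Proof.
elim: n => [|n IH].
  by rewrite big_geq // T0 T1 /Af /Bf /Cf; field.
have sS : forall F : nat -> rat, \sum_(0 <= k < n.+1) F k = \sum_(0 <= k < n) F k + F n.
  by move=> F; rewrite big_nat_recr.
rewrite sS IH (TrecR n) !natrM natrD !natrM.
rewrite -(@natr1 rat n) /Af /Bf /Cf.
have hx := ler0n rat n.
move: (n%:R) hx (u n) (u n.+1) => x hx a b.
clear IH sS. by field; nz.
Qed.

Lemma rec_uniq (w v : nat -> rat) : (forall n, c3 n != 0) ->
  (forall n, c0 n * w n + c1 n * w n.+1 + c2 n * w n.+2 + c3 n * w n.+3 = 0) ->
  (forall n, c0 n * v n + c1 n * v n.+1 + c2 n * v n.+2 + c3 n * v n.+3 = 0) ->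
  w 0%N = v 0%N -> w 1%N = v 1%N -> w 2%N = v 2%N -> forall n, w n = v n.
Proof.
move=> h3 hw hv e0 e1 e2.
have H : forall n, [/\ w n = v n, w n.+1 = v n.+1 & w n.+2 = v n.+2].
  elim=> [|n [a b c]]; first by split.
  split=> //.
  have := hw n; have := hv n; rewrite a b c => E1 E2.
  apply: (mulfI (h3 n)).
  apply: (@addrI _ (c0 n * v n + c1 n * v n.+1 + c2 n * v n.+2)).
  by rewrite E1 E2.
by move=> n; case: (H n).
Qed.

Lemma c3_neq0 (n : nat) : c3 n != 0.
Proof. rewrite /c3; nz. Qed.

Lemma Tsq_rec (n : nat) :
  c0 n * u n ^+ 2 + c1 n * u n.+1 ^+ 2 + c2 n * u n.+2 ^+ 2 + c3 n * u n.+3 ^+ 2 = 0.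
Proof.
rewrite (TrecR n.+1) (TrecR n) -(@natr1 rat n) /c0 /c1 /c2 /c3.
have hx := ler0n rat n.
move: (n%:R) hx (u n) (u n.+1) => x hx a b.
by field; nz.
Qed.

Lemma XT (n : nat) : X n = u n ^+ 2.
Proof.
apply: (@rec_uniq X (fun m => u m ^+ 2)) => //.
- exact: c3_neq0.
- exact: Xrec.
- exact: Tsq_rec.
- by rewrite X0 T0 expr1n.
- by rewrite X1 T1 expr1n.
- by rewrite X2 T2.
Qed.

Lemma sign_sq (k : nat) : ((-1)^+k * (-1)^+k : rat) = 1.
Proof. by rewrite -exprD -signr_odd oddD addbb expr0. Qed.

Lemma m3pow (j : nat) : ((-3)^+j : rat) = (-1)^+j * 3^+j.
Proof. by rewrite -exprMn mulN1r. Qed.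

Lemma term (m k : nat) : (k <= m)%N ->
  (-1) ^+ m.+1 * m.+1%:R / 6%:R *
  (binz m%:Z k * binz (- (m.+1%:Z) - 1) k * catalan k * 3%:R ^+ (m - k) * a_coef m.+1 k)
  = f m.+1 k / 18.
Proof.
move=> hk.
rewrite binz_nat binz_neg /catalan /f /h !m3pow.
have e3 : (3 : rat)^+m.+1 = 3 * 3^+(m-k) * 3^+k by rewrite exprS -mulrA -exprD subnK.
rewrite e3.
have e1 := binD m k.
have e2 := sign_sq k.
set D := (-1)^+m.+1 * 3%:R ^+ (m - k) * ('C(m.+1 + k, k))%:R * ('C(2 * k, k))%:R * a_coef m.+1 k
   / (6 * (k%:R + 1)).
apply: (lc1 (- D / (-1)^+k) e1).
apply: (lc1 (D * m.+1%:R * ('C(m, k))%:R / (-1)^+k) e2).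
rewrite /D -(@natr1 rat k) -(@natr1 rat m).
have hx := ler0n rat m; have hy := ler0n rat k.
move: (a_coef m.+1 k) ((-1)^+m.+1 : rat) ((3 : rat)^+(m-k)) (('C(m.+1+k,k))%:R : rat)
  (('C(2*k,k))%:R : rat) (('C(m,k))%:R : rat) (('C(m.+1,k))%:R : rat) => A sg p C1 C2 C3 C4.
move: (m%:R) (k%:R) hx hy => x y hx hy.
field. nz.
Qed.

Lemma f_zero (n k : nat) : (n <= k)%N -> f n k / 18 = 0.
Proof.
rewrite leq_eqVlt => /orP[/eqP <-|hk].
  by rewrite /f subrr !(mulr0, mul0r).
by rewrite /f h_big // !mul0r.
Qed.

Theorem lemma3p2 (n : nat) (hn : (0 < n)%N) :
  \sum_(0 <= k < n)
     ((k * k.+1 * (8 * k + 9) * T k * T k.+1)%N)%:R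
  = (-1) ^+ n * n%:R / 6%:R *
    \sum_(0 <= k < n)
      binz (n.-1)%:Z k * binz (- (n%:Z) - 1) k * catalan k
      * 3%:R ^+ (n.-1 - k) * a_coef n k :> rat.
Proof.
case: n hn => [//|m] _.
rewrite LHS_Q mulr_sumr /=.
rewrite (@eq_big_nat _ _ _ 0 m.+1 _ (fun k => f m.+1 k / 18)); last first.
  by move=> k /andP[_ hk]; rewrite term.
have E : \sum_(0 <= k < m.+1) f m.+1 k / 18 = \sum_(0 <= k < m.+4) f m.+1 k / 18.
  apply/esym/(@sum_ext (fun k => f m.+1 k / 18)); first lia.
  by move=> k hk; rewrite f_zero.
rewrite E Rstep !XT (TrecR m.+1) /alf /bef /gaf /Af /Bf /Cf.
have hx := ler0n rat m.+1.
move: (m.+1%:R) hx (u m.+1) (u m.+2) => x hx a b.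
by field; nz.
Qed.
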